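(* The class of data languages accepted by SAFA is not closed under reversal: there exists a data language $L$ accepted by some SAFA such that no SAFA accepts $L^R=\{(a_n,d_n)\cdots(a_1,d_1): (a_1,d_1)\cdots(a_n,d_n)\in L\}$.
   Context: $D$ is a fixed countably infinite set of data values; for a finite alphabet $\Sigma$, data words are elements of $(\Sigma\times D)^*$. A set augmented finite automaton (SAFA) is a tuple $M=(Q,\Sigma\times D,q_0,F,H,\delta)$: $Q$ finite set of states, $q_0\in Q$ initial, $F\subseteq Q$ final, $H=\{h_1,\dots,h_m\}$ a finite collection of (names of) sets of data values, $\delta\subseteq Q\times\Sigma\times C\times OP\times Q$ with $C=\{p(h_i),\,!p(h_i): h_i\in H\}$, $OP=\{-\}\cup\{\mathsf{ins}(h_i):h_i\in H\}$. Configurations are $(q,\langle S_1,\dots,S_m\rangle)$ with $S_i\subseteq D$ finite; initially state $q_0$ and all sets empty. On reading $(a,d)$, a transition $(q,a,\alpha,op,q')$ from the current state may be taken if $\alpha=p(h_i)$ and $d\in S_i$, or $\alpha=\,!p(h_i)$ and $d\notin S_i$; then the state becomes $q'$ and if $op=\mathsf{ins}(h_j)$ the value $d$ is added to $S_j$ ($op=-$ changes nothing). A word is accepted if some run reads it entirely and ends in $F$; $L(M)$ is the set of accepted words. *)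

(* Defs.v *)
From mathcomp Require Import all_boot.
Set Implicit Arguments. Unset Strict Implicit. Unset Printing Implicit Defensive.

(* The fixed countably infinite set D of data values is taken to be nat. *)
Definition data := nat.

Definition dword (Sigma : finType) := seq (Sigma * data).

Definition dlang (Sigma : finType) := dword Sigma -> Prop.

(* H = {h_0, ..., h_(nsets-1)} is represented by the index type 'I_nsets.
   A condition p(h_i) is (true, i); !p(h_i) is (false, i).
   An operation '-' is None, ins(h_j) is Some j. *)
Record safa (Sigma : finType) := Safa {
  st : finType;
  q0 : st;
  final : pred st;
  nsets : nat;
  delta : seq (st * Sigma * (bool * 'I_nsets) * option 'I_nsets * st)
}.

Definition config (Sigma : finType) (M : safa Sigma) :=
  (st M * ('I_(nsets M) -> seq data))%type.

Definition init_config (Sigma : finType) (M : safa Sigma) : config M :=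
  (q0 M, fun _ => [::]).

Definition step (Sigma : finType) (M : safa Sigma) (c : config M)
    (x : Sigma * data) (c' : config M) : Prop :=
  exists (q' : st M) (b : bool) (i : 'I_(nsets M)) (op : option 'I_(nsets M)),
    (c.1, x.1, (b, i), op, q') \in delta M /\
    (x.2 \in c.2 i) = b /\
    c' = (q', fun j => if op == Some j then x.2 :: c.2 j else c.2 j).

Fixpoint accepts_from (Sigma : finType) (M : safa Sigma) (c : config M)
    (w : dword Sigma) : Prop :=
  match w with
  | [::] => final c.1
  | x :: w' => exists c' : config M, @step Sigma M c x c' /\ @accepts_from Sigma M c' w'
  end.

Definition lang (Sigma : finType) (M : safa Sigma) : dlang Sigma :=
  fun w => @accepts_from Sigma M (init_config M) w.

Definition rev_lang (Sigma : finType) (L : dlang Sigma) : dlang Sigma :=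
  fun w => L (rev w).

(* Main.v *)
Require Import Defs.
From mathcomp Require Import all_boot.
Set Implicit Arguments. Unset Strict Implicit. Unset Printing Implicit Defensive.

Fixpoint run (S : finType) (M : safa S) (c : config M) (u : dword S)
  (cs : seq (config M)) : Prop :=
  match u, cs with
  | [::], [::] => True
  | x :: u', c1 :: cs' => step c x c1 /\ run c1 u' cs'
  | _, _ => False
  end.

Definition reach (S : finType) (M : safa S) (c : config M) u (c' : config M) :=
  exists cs, run c u cs /\ last c cs = c'.

Lemma run_size (S : finType) (M : safa S) (c : config M) u cs :
  run c u cs -> size cs = size u.
Proof.
elim: u c cs => [|x u IH] c [|c1 cs] //= [_ H].
by rewrite (IH _ _ H).
Qed.

Lemma run_cat (S : finType) (M : safa S) x y (c : config M) cs1 cs2 :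
  size cs1 = size x ->
  run c (x ++ y) (cs1 ++ cs2) <-> run c x cs1 /\ run (last c cs1) y cs2.
Proof.
elim: x c cs1 => [|a x IH] c [|c1 cs1] //= Hs.
- tauto.
- case: Hs => Hs; have := IH c1 cs1 Hs; tauto.
Qed.

Lemma acc_split (S : finType) (M : safa S) u v (c : config M) :
  accepts_from c (u ++ v) -> exists c', reach c u c' /\ accepts_from c' v.
Proof.
elim: u c => [|x u IH] c /=.
- move=> H; exists c; split => //; by exists [::].
- case=> c1 [Hs /IH [c' [[cs [Hr Hl]] Hv]]].
  exists c'; split => //; exists (c1 :: cs); by split.
Qed.

Lemma reach_acc (S : finType) (M : safa S) u v (c c' : config M) :
  reach c u c' -> accepts_from c' v -> accepts_from c (u ++ v).
Proof.
elim: u c => [|x u IH] c [[|c1 cs] [Hr Hl]] Hv /=.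
- by move: Hv; rewrite -Hl.
- by [].
- by [].
- case: Hr => Hs Hr; exists c1; split => //; apply: IH Hv; by exists cs.
Qed.

Lemma mem_inv (S : finType) (M : safa S) y (c : config M) cs :
  run c y cs -> forall d, d \notin map snd y -> forall i,
  (d \in (last c cs).2 i) = (d \in c.2 i).
Proof.
elim: y c cs => [|x y IH] c [|c1 cs] //=.
case=> [[q' [b [i [op [_ [_ Hc1]]]]]] Hr] d; rewrite inE negb_or => /andP [Hdx Hd] j.
rewrite (IH _ _ Hr d Hd j) Hc1 /=.
case: eqP => _ //.
by rewrite in_cons (negbTE Hdx).
Qed.

Lemma transfer (S : finType) (M : safa S) z (c c' : config M) :
  c.1 = c'.1 -> (forall d, d \in map snd z -> forall i, (d \in c.2 i) = (d \in c'.2 i)) ->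
  accepts_from c z -> accepts_from c' z.
Proof.
elim: z c c' => [|x z IH] c c' /= E H.
- by rewrite -E.
- case=> c1 [[q' [b [i [op [Hd [Hb Hc1]]]]]] Hacc].
  exists (q', fun j => if op == Some j then x.2 :: c'.2 j else c'.2 j).
  split.
  + exists q', b, i, op.
    rewrite -E -(H x.2 (mem_head _ _) i).
    by split.
  + apply: (IH c1) => //; first by rewrite Hc1.
    move=> d Hdz j; rewrite Hc1 /=.
    have Hd2 : d \in map snd (x :: z) by rewrite in_cons Hdz orbT.
    by case: (op == Some j); rewrite ?in_cons (H d Hd2).
Qed.

Lemma nth_last (T : Type) (c : T) cs i :
  i <= size cs -> nth c (c :: cs) i = last c (take i cs).
Proof.
elim: cs c i => [|c1 cs IH] c [|i] //= Hi.
rewrite (set_nth_default c1) //= IH //.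
Qed.

Lemma size_take_eq (A B : Type) n (s : seq A) (t : seq B) :
  size s = size t -> size (take n s) = size (take n t).
Proof. by rewrite !size_take => ->. Qed.

Lemma size_drop_eq (A B : Type) n (s : seq A) (t : seq B) :
  size s = size t -> size (drop n s) = size (drop n t).
Proof. by rewrite !size_drop => ->. Qed.

Lemma loop (S : finType) (M : safa S) (c : config M) u cs :
  run c u cs -> #|st M| <= size u ->
  exists x y z cx cy, [/\ u = x ++ y ++ z, y != [::], reach c x cx,
     reach cx y cy & cx.1 = cy.1 /\ reach cy z (last c cs)].
Proof.
move=> Hr Hsz; have Hs := run_size Hr.
have : ~~ uniq (map fst (c :: cs)).
  apply/negP => /card_uniqP; rewrite size_map /= Hs => E.
  have := max_card (mem (map fst (c :: cs))).
  by rewrite E ltnNge Hsz.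
case/(uniqPn c.1) => i [j [ltij ltj Eij]].
rewrite size_map /= Hs in ltj.
rewrite (nth_map c _ _ (n:=i)) in Eij; last by rewrite /= Hs (ltn_trans ltij).
rewrite (nth_map c _ _ (n:=j)) in Eij; last by rewrite /= Hs.
rewrite !nth_last in Eij; [|by rewrite Hs -ltnS|by rewrite Hs -ltnS (ltn_trans ltij)].
have Hu : u = take i u ++ take (j - i) (drop i u) ++ drop j u.
  by rewrite -{1}(cat_take_drop i u) -{1}(cat_take_drop (j-i) (drop i u)) drop_drop subnK // ltnW.
have Hcs : cs = take i cs ++ take (j - i) (drop i cs) ++ drop j cs.
  by rewrite -{1}(cat_take_drop i cs) -{1}(cat_take_drop (j-i) (drop i cs)) drop_drop subnK // ltnW.
have Hr' : run c (take i u ++ take (j - i) (drop i u) ++ drop j u)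
   (take i cs ++ take (j - i) (drop i cs) ++ drop j cs) by rewrite -Hu -Hcs.
have [H1 H23] := (run_cat _ _ _ (size_take_eq i Hs)).1 Hr'.
have [H2 H3] := (run_cat _ _ _ (size_take_eq (j - i) (size_drop_eq i Hs))).1 H23.
exists (take i u), (take (j - i) (drop i u)), (drop j u), (last c (take i cs)),
  (last (last c (take i cs)) (take (j - i) (drop i cs))).
split => //; last split.
- rewrite -size_eq0 size_take size_drop -lt0n.
  case: ifP => _; rewrite subn_gt0 //.
  by rewrite (leq_trans ltij) // -ltnS.
- by exists (take i cs).
- by exists (take (j - i) (drop i cs)).
- by rewrite -last_cat -takeD subnKC // ltnW.
- exists (drop j cs); split => //.
  by rewrite -!last_cat -Hcs.
Qed.
Definition M0 : safa bool := @Safa bool bool true predT 1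
 [:: (true, true, (true, ord0), Some ord0, true);
     (true, true, (false, ord0), Some ord0, true);
     (true, false, (true, ord0), None, false);
     (false, false, (true, ord0), None, false)].

Lemma M0_delta q a b (i : 'I_1) op q' :
  (q, a, (b, i), op, q') \in delta M0 -> a = false -> b = true /\ op = None.
Proof.
rewrite (ord1 i) /= !inE.
by case: q a b op q' => [] [] [] [j|] [] //=; rewrite ?(ord1 j) //=.
Qed.

Lemma M0_sound w (c : config M0) : accepts_from c w ->
  forall p, p \in w -> p.1 = false -> p.2 \in c.2 ord0 \/ (true, p.2) \in w.
Proof.
elim: w c => [|x w IH] c //= [c1 [[q' [b [i [op [Hd [Hb Hc1]]]]]] Hacc]] p.
rewrite in_cons => /orP [/eqP -> | Hp] Hf.
- have [Eb _] := M0_delta Hd Hf.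
  by left; rewrite -(ord1 i) Hb Eb.
- case: (IH c1 Hacc p Hp Hf) => [H|H]; last by right; rewrite in_cons H orbT.
  rewrite Hc1 /= in H.
  case Eop: (op == Some ord0) in H; last by left.
  rewrite in_cons in H; case/orP: H => [/eqP E|H]; last by left.
  right; rewrite in_cons; apply/orP; left.
  case: x Hd Hb Hc1 E => [a v] /= Hd Hb Hc1 ->.
  case: a Hd => // Hd.
  by have [_ E] := M0_delta Hd erefl; rewrite E in Eop.
Qed.

Lemma M0_accB l' (c : config M0) : {subset l' <= c.2 ord0} ->
  accepts_from c (map (pair false) l').
Proof.
elim: l' c => [|k l' IH] c Hsub //=.
exists (false, fun j => if None == Some j then k :: c.2 j else c.2 j).
split.
- exists false, true, ord0, None; split; last split => //.
  + by case: c Hsub => [[] f] _; rewrite !inE.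
  + by apply: Hsub; rewrite mem_head.
- apply: IH => y Hy /=; apply: Hsub; by rewrite in_cons Hy orbT.
Qed.

Lemma M0_accA l l' (c : config M0) : c.1 = true -> {subset l' <= l ++ c.2 ord0} ->
  accepts_from c (map (pair true) l ++ map (pair false) l').
Proof.
elim: l c => [|k l IH] c Hc Hsub /=.
- exact: M0_accB.
- exists (true, fun j => if Some ord0 == Some j then k :: c.2 j else c.2 j).
  split.
  + exists true, (k \in c.2 ord0), ord0, (Some ord0); split; last split => //.
    by rewrite Hc; case: (k \in c.2 ord0); rewrite !inE.
  + apply: IH => // y Hy /=.
    have := Hsub y Hy; rewrite /= !(in_cons, mem_cat).
    by case: (y == k); case: (y \in l); case: (y \in c.2 ord0).
Qed.

Lemma map_snd_pair (b : bool) (l : seq nat) : map snd (map (pair b) l) = l.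
Proof. by elim: l => //= a l ->. Qed.

Theorem theorem8 :
  exists (Sigma : finType) (M : safa Sigma),
    forall M' : safa Sigma,
      ~ (forall w : dword Sigma, lang M' w <-> rev_lang (lang M) w).
Proof.
exists bool, M0 => M' HM.
pose l := iota 0 #|st M'|.
pose bs : dword bool := map (pair false) l.
pose aw : dword bool := map (pair true) l.
have Hacc : lang M' (bs ++ aw).
  apply/HM; rewrite /rev_lang /lang rev_cat /aw /bs -!map_rev.
  apply: M0_accA => // y; by rewrite cats0.
have [c0 [Hb Ha]] := acc_split Hacc.
have Ha' : accepts_from c0 (aw ++ [::]) by rewrite cats0.
have [cf [[cs [Hr Hl]] Hf]] := acc_split Ha'.
have [x [y [z [cx [cy [Hu Hy Hx Hxy [E Hz]]]]]]] :
  exists x y z cx cy, [/\ aw = x ++ y ++ z, y != [::], reach c0 x cx,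
     reach cx y cy & cx.1 = cy.1 /\ reach cy z (last c0 cs)].
  apply: loop Hr _; by rewrite size_map size_iota.
have Hun : uniq (map snd x ++ map snd y ++ map snd z).
  by rewrite -!map_cat -Hu map_snd_pair iota_uniq.
have Hz' : accepts_from cy z.
  rewrite -[z]cats0; apply: reach_acc Hz _; by rewrite /= Hl.
have Hzx : accepts_from cx z.
  apply: transfer Hz' => // d Hd i.
  case: Hxy => cs' [Hr' Hl']; rewrite -Hl' (mem_inv Hr') //.
  move: Hun; rewrite cat_uniq => /and3P [_ _]; rewrite cat_uniq => /and3P [_ /hasPn H _].
  exact: H.
have Hbad : lang M' (bs ++ x ++ z) by apply: reach_acc Hb _; apply: reach_acc Hx Hzx.
move/HM: Hbad; rewrite /rev_lang /lang => Hbad.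
case: y Hu Hy Hun Hxy => [//|p y] Hu _ Hun _.
have Hpl : p.2 \in l by rewrite -(map_snd_pair true l) -/aw Hu map_f // !mem_cat mem_head orbT.
have := M0_sound Hbad (p := (false, p.2)).
rewrite !rev_cat !mem_cat !mem_rev /= (map_f (pair false) Hpl) orbT => /(_ isT erefl).
case=> // /orP [/orP [Hin|Hin]|Hin].
- move: Hun; rewrite cat_uniq => /and3P [_ _]; rewrite cat_uniq => /and3P [_ /hasPn H _].
  by move: (H _ (map_f snd Hin)); rewrite /= mem_head.
- move: Hun; rewrite cat_uniq => /and3P [_ /hasPn H _].
  by move: (H p.2); rewrite mem_cat /= mem_head (map_f snd Hin) => /(_ isT).
- by case/mapP: Hin.
Qed.
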